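(* Let $A$ be a honeycomb array with $n\geq 1$ dots. Then $n=2r+1$ for some non-negative integer $r$ and $A$ is a honeycomb array of radius $r$, i.e. its dots are contained in a Lee sphere of radius $r$. In particular, a honeycomb array consists of an odd number of dots.
   Context: Model the cells (hexagons) of the hexagonal grid by $\mathbb{Z}^2$, where cell $(x,y)$ is adjacent to the six cells $(x\pm1,y)$, $(x,y\pm1)$, $(x+1,y+1)$, $(x-1,y-1)$. The ''rows'' of the hexagonal grid in its three natural directions are the sets $\{y=c\}$, $\{x=c\}$ and $\{x-y=c\}$ for $c\in\mathbb{Z}$; two rows of the same direction are consecutive if their constants differ by $1$. A hexagonal permutation with $n$ dots is a set $\pi$ of $n$ cells such that, for each of the three directions, the rows of that direction containing a dot of $\pi$ are exactly $n$ consecutive rows, and each of these rows contains exactly one dot. A set of $n$ dots has the distinct differences property if the $n(n-1)$ vector differences $p-q$ (for ordered pairs of distinct dots $p\neq q$) are pairwise different. A honeycomb array is a hexagonal permutation with the distinct differences property. The distance between cells $(x,y)$ and $(a,b)$ is the length of a shortest path of adjacent cells joining them, namely $\max(|x-a|,|y-b|,|(x-a)-(y-b)|)$; a Lee sphere of radius $r$ with centre $(a,b)$ is the set of cells at distance at most $r$ from $(a,b)$. A honeycomb array of radius $r$ is a honeycomb array with $2r+1$ dots contained in a Lee sphere of radius $r$. *)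

(* Defs.v *)
From Stdlib Require Import ZArith List Lia.
Open Scope Z_scope.

Definition cell : Type := (Z * Z)%type.

(* The three row directions: {y = c}, {x = c}, {x - y = c}. *)
Definition dir_y (p : cell) : Z := snd p.
Definition dir_x (p : cell) : Z := fst p.
Definition dir_xy (p : cell) : Z := fst p - snd p.

Definition rows_ok (f : cell -> Z) (pi : list cell) : Prop :=
  exists c : Z,
    (forall p, In p pi -> c <= f p < c + Z.of_nat (length pi)) /\
    (forall k : Z, c <= k < c + Z.of_nat (length pi) ->
       exists p, In p pi /\ f p = k /\
         forall q, In q pi -> f q = k -> q = p).

Definition hex_permutation (pi : list cell) : Prop :=
  NoDup pi /\ rows_ok dir_y pi /\ rows_ok dir_x pi /\ rows_ok dir_xy pi.

Definition vsub (p q : cell) : cell := (fst p - fst q, snd p - snd q).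

Definition distinct_differences (pi : list cell) : Prop :=
  forall p q p' q', In p pi -> In q pi -> In p' pi -> In q' pi ->
    p <> q -> p' <> q' -> vsub p q = vsub p' q' -> p = p' /\ q = q'.

Definition honeycomb_array (pi : list cell) : Prop :=
  hex_permutation pi /\ distinct_differences pi.

Definition hex_dist (p q : cell) : Z :=
  Z.max (Z.abs (fst p - fst q))
        (Z.max (Z.abs (snd p - snd q))
               (Z.abs ((fst p - fst q) - (snd p - snd q)))).

Definition in_lee_sphere (r : Z) (center p : cell) : Prop :=
  hex_dist p center <= r.

Definition honeycomb_array_radius (r : Z) (pi : list cell) : Prop :=
  honeycomb_array pi /\ Z.of_nat (length pi) = 2 * r + 1 /\
  exists center : cell, forall p, In p pi -> in_lee_sphere r center p.

(* Main.v *)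
Require Import Defs.
From Stdlib Require Import ZArith List Lia Permutation.
Open Scope Z_scope.

Definition zsum (l : list Z) : Z := fold_right Z.add 0 l.

Lemma zsum_perm l l' : Permutation l l' -> zsum l = zsum l'.
Proof. induction 1; simpl; lia. Qed.

Lemma zsum_app l l' : zsum (l ++ l') = zsum l + zsum l'.
Proof. induction l; simpl; lia. Qed.

Lemma zsum_seq c n :
  2 * zsum (map (fun i => c + Z.of_nat i) (seq 0 n)) = 2 * Z.of_nat n * c + Z.of_nat n * (Z.of_nat n - 1).
Proof.
  induction n.
  - simpl; lia.
  - rewrite seq_S, map_app, zsum_app. cbn [zsum map fold_right Nat.add]. rewrite Nat2Z.inj_succ. unfold zsum in *. nia.
Qed.

Lemma zsum_sub (pi : list cell) :
  zsum (map dir_xy pi) = zsum (map dir_x pi) - zsum (map dir_y pi).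
Proof. induction pi; simpl; unfold dir_xy, dir_x, dir_y in *; lia. Qed.

Lemma rows_sum f pi : NoDup pi -> rows_ok f pi ->
  exists c, (forall p, In p pi -> c <= f p < c + Z.of_nat (length pi)) /\
   2 * zsum (map f pi) = 2 * Z.of_nat (length pi) * c
      + Z.of_nat (length pi) * (Z.of_nat (length pi) - 1).
Proof.
  intros Hnd [c [Hin Hsur]]. exists c. split; [exact Hin|].
  rewrite <- zsum_seq. f_equal. apply zsum_perm.
  apply NoDup_Permutation.
  - apply NoDup_map_NoDup_ForallPairs; [|exact Hnd].
    intros p q Hp Hq E.
    destruct (Hsur (f p)) as [p0 [Hp0 [Hf0 Hu]]]. { apply Hin; exact Hp. }
    rewrite (Hu p Hp eq_refl), (Hu q Hq (eq_sym E)). reflexivity.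
  - apply NoDup_map_NoDup_ForallPairs; [|apply seq_NoDup].
    intros i j _ _ E; lia.
  - intros x; split; intros H.
    + apply in_map_iff in H as [p [<- Hp]].
      apply in_map_iff. exists (Z.to_nat (f p - c)).
      specialize (Hin p Hp). split; [lia|]. apply in_seq. lia.
    + apply in_map_iff in H as [i [<- Hi]]. apply in_seq in Hi.
      destruct (Hsur (c + Z.of_nat i)) as [p [Hp [Hf _]]]. lia.
      apply in_map_iff. exists p; auto.
Qed.

Theorem corollary2 (A : list cell) :
  honeycomb_array A -> (1 <= length A)%nat ->
  exists r : Z, 0 <= r /\ Z.of_nat (length A) = 2 * r + 1 /\
    honeycomb_array_radius r A.
Proof.
  intros HA Hn. pose proof HA as HA'.
  destruct HA as [[Hnd [Hy [Hx Hxy]]] Hdd].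
  destruct (rows_sum _ _ Hnd Hy) as [b [Hb Sb]].
  destruct (rows_sum _ _ Hnd Hx) as [a [Ha Sa]].
  destruct (rows_sum _ _ Hnd Hxy) as [c [Hc Sc]].
  rewrite zsum_sub in Sc.
  set (n := Z.of_nat (length A)) in *.
  assert (Hn1 : 1 <= n) by lia.
  assert (E : n * (2 * (a - b - c) - (n - 1)) = 0) by (clearbody n; nia).
  apply Z.mul_eq_0 in E. destruct E as [E|E]; [lia|].
  exists (a - b - c). split; [lia|]. split; [lia|].
  split; [exact HA'|]. split; [lia|].
  exists (a + (a - b - c), b + (a - b - c)). intros p Hp.
  specialize (Ha p Hp); specialize (Hb p Hp); specialize (Hc p Hp).
  unfold in_lee_sphere, hex_dist, dir_x, dir_y, dir_xy in *.
  destruct p as [x y]; cbn [fst snd] in *. clearbody n. lia.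
Qed.
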